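(* Let $E$ be a set and $T$ a set of clauses $X\Rightarrow Y$ ($X,Y\subseteq E$) that is rooted, i.e. no clause of the form $\emptyset\Rightarrow Y$ is a logical consequence of $T$. Define the Petri net $\mathcal{N}(T)$ as follows: its transitions are the elements of $E$; for each $e\in E$ there is a place containing one initial token, with no incoming arcs and a single outgoing arc (of weight 1) to $e$; and for each clause $(X\Rightarrow Y)\in T$ with $X$ finite there is a place with an arc of weight 1 to each transition in $X$, an arc of weight 1 from each transition in $Y$, and $|X|-1$ initial tokens. Then the configurations of $\mathcal{N}(T)$ are exactly the finite models of $T$ (multisets with values in $\{0,1\}$ being identified with sets).
   Context: A clause $X\Rightarrow Y$ stands for $\bigwedge X\Rightarrow\bigvee Y$; a model of $T$ is a set $m\subseteq E$ such that for every clause $X\Rightarrow Y$ in $T$, $X\subseteq m$ implies $Y\cap m\ne\emptyset$; a clause is a logical consequence of $T$ if it holds in every model of $T$. A Petri net is $(S,T,F,I)$ with disjoint sets $S$ (places) and $T$ (transitions), flow function $F:(S\times T\cup T\times S)\to\mathbb{N}$ and initial marking $I:S\to\mathbb{N}$. For a finite multiset $X:T\to\mathbb{N}$ put ${}^\bullet X(s)=\sum_t F(s,t)X(t)$ and $X^\bullet(s)=\sum_t X(t)F(t,s)$. A configuration of the net is a finite multiset $X$ of transitions such that $I-{}^\bullet X+X^\bullet\ge 0$ pointwise. *)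

(* Defs.v *)
From HB Require Import structures.
From mathcomp Require Import all_boot all_order all_algebra.
From mathcomp Require Import finmap boolp classical_sets functions cardinality fsbigop.
Set Implicit Arguments. Unset Strict Implicit. Unset Printing Implicit Defensive.
Import Order.TTheory GRing.Theory Num.Theory.
Local Open Scope classical_set_scope.

Definition clause (E : Type) := (set E * set E)%type.

Definition clause_holds (E : Type) (m : set E) (c : clause E) : Prop :=
  c.1 `<=` m -> c.2 `&` m !=set0.

Definition is_model (E : Type) (T : set (clause E)) (m : set E) : Prop :=
  forall c, T c -> clause_holds m c.

Definition consequence (E : Type) (T : set (clause E)) (c : clause E) : Prop :=
  forall m : set E, is_model T m -> clause_holds m c.

Definition rooted (E : Type) (T : set (clause E)) : Prop :=
  forall Y : set E, ~ consequence T (set0, Y).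

(* Petri net (S, T, F, I): F restricted to S x T is [pre], to T x S is [post]. *)
Record petri_net := PetriNet {
  place : Type;
  trans : choiceType;
  pre : place -> trans -> nat;
  post : trans -> place -> nat;
  init : place -> nat
}.

Definition finite_multiset (N : petri_net) (X : trans N -> nat) : Prop :=
  finite_set [set t | X t != 0%N].

Definition preset (N : petri_net) (X : trans N -> nat) (s : place N) : nat :=
  \big[addn/0%N]_(t \in [set: trans N]) (pre s t * X t)%N.
Definition postset (N : petri_net) (X : trans N -> nat) (s : place N) : nat :=
  \big[addn/0%N]_(t \in [set: trans N]) (X t * post t s)%N.

Definition configuration (N : petri_net) (X : trans N -> nat) : Prop :=
  finite_multiset X /\
  forall s : place N,
    (0 <= (init s)%:Z - (preset X s)%:Z + (postset X s)%:Z)%R.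

Definition clause_place (E : Type) (T : set (clause E)) :=
  {c : clause E | T c /\ finite_set c.1}.

Definition NT_place (E : choiceType) (T : set (clause E)) : Type :=
  (E + clause_place T)%type.

Definition NT_pre (E : choiceType) (T : set (clause E))
    (s : NT_place T) (t : E) : nat :=
  match s with
  | inl e => nat_of_bool (e == t)
  | inr c => nat_of_bool (t \in (proj1_sig c).1)
  end.

Definition NT_post (E : choiceType) (T : set (clause E))
    (t : E) (s : NT_place T) : nat :=
  match s with
  | inl _ => 0%N
  | inr c => nat_of_bool (t \in (proj1_sig c).2)
  end.

(* |X| - 1 initial tokens (X is nonempty for rooted T) *)
Definition NT_init (E : choiceType) (T : set (clause E)) (s : NT_place T) : nat :=
  match s with
  | inl _ => 1%N
  | inr c => (#|` fset_set (proj1_sig c).1 | - 1)%N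
  end.

Definition NT (E : choiceType) (T : set (clause E)) : petri_net :=
  @PetriNet (NT_place T) E (@NT_pre E T) (@NT_post E T) (@NT_init E T).

(* Main.v *)
Require Import Defs.
From HB Require Import structures.
From mathcomp Require Import all_boot all_order all_algebra.
From mathcomp Require Import finmap boolp classical_sets functions cardinality fsbigop.
From mathcomp Require Import zify.
Local Open Scope classical_set_scope.

Section Aux.
Variables (E : choiceType) (T : set (clause E)).

Lemma pre_inl (X : E -> nat) e : preset (N:=NT T) X (inl e) = X e.
Proof.
rewrite /preset (fsbigTE [fset e]%fset); last first.
  by move=> i; rewrite inE /= => /negbTE; rewrite eq_sym => ->.
by rewrite big_seq_fset1 /= eqxx mul1n.
Qed.

Lemma post_inl (X : E -> nat) e : postset (N:=NT T) X (inl e) = 0%N.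
Proof. by apply: fsbig1 => t _ /=; rewrite muln0. Qed.

Lemma pre_inr (X : E -> nat) (c : clause_place T) :
  preset (N:=NT T) X (inr c) =
  \sum_(t <- fset_set (proj1_sig c).1) X t.
Proof.
have finA := proj2 (proj2_sig c).
rewrite /preset (fsbigTE (fset_set (proj1_sig c).1)); last first.
  move=> i; rewrite in_fset_set // => /negbTE /=.
  by rewrite /NT_pre => ->.
apply: eq_big_seq => t; rewrite in_fset_set //= => ->.
by rewrite mul1n.
Qed.

Lemma rooted_nonempty (c : clause E) : rooted T -> T c -> c.1 !=set0.
Proof.
move=> rT Tc; apply/set0P/eqP => c0.
apply: (rT c.2) => m mod; have := mod c Tc.
by rewrite /clause_holds c0.
Qed.

Lemma memNz (X : E -> nat) e : (e \in [set t | X t != 0%N]) = (X e != 0%N).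
Proof. by apply/idP/idP => [/set_mem //|h]; apply/mem_set. Qed.

Lemma size_pos (S : {fset E}) a : a \in S -> (0 < size S)%N.
Proof.
move=> aS; rewrite lt0n size_eq0; apply/negP => /eqP h.
by rewrite -[a \in S]/(a \in (S : seq E)) h in aS.
Qed.

End Aux.

Theorem mainTheorem5 (E : choiceType) (T : set (clause E)) :
  rooted T ->
  forall X : E -> nat,
    @configuration (NT T) X <->
    exists m : set E,
      finite_set m /\ is_model T m /\ (forall e, X e = nat_of_bool (e \in m)).
Proof.
move=> rT X; split.
- move=> [finX Hs].
  have X1 : forall e, (X e <= 1)%N.
    move=> e; have := Hs (inl e); rewrite pre_inl post_inl /=; lia.
  exists [set t | X t != 0%N]; split; first exact: finX.
  split; last first.
    move=> e; rewrite memNz; have := X1 e; case: (X e) => [|[|]] //.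
  move=> [A B] Tc /= sAm.
  have finA : finite_set A by apply: sub_finite_set finX.
  pose c : clause_place T := exist _ (A, B) (conj Tc finA).
  have := Hs (inr c); rewrite pre_inr /=.
  have -> : \sum_(t <- fset_set A) X t = size (fset_set A).
    rewrite -sum1_size; apply: eq_big_seq => t; rewrite in_fset_set // => /set_mem /sAm /=.
    by have := X1 t; case: (X t) => [|[|]].
  have [a Aa] := @rooted_nonempty _ _ _ rT Tc.
  have : a \in fset_set A by rewrite in_fset_set // inE.
  move=> aA H.
  have pos : (0 < #|` fset_set A|)%N := @size_pos _ _ _ aA.
  move: H; rewrite /NT_init /= => H.
  have : postset (N:=NT T) X (inr c) != 0%N.
    move: H pos; set p := postset _ _; set k := #|` _|; rewrite -lt0n; lia.
  move=> /negP pne; apply: contrapT => nB; apply: pne; apply/eqP; apply: fsbig1 => t _ /=.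
  apply/eqP; rewrite muln_eq0 /NT_post /=; apply/negPn/negP.
  rewrite negb_or => /andP[Xt Bt]; apply: nB; exists t; split => //.
  by move: Bt; case: (t \in B) (@set_mem _ B t) => // /(_ isT).
- move=> [m [finm [mod Xm]]]; split.
    rewrite /finite_multiset; apply: sub_finite_set finm => t /=.
    by rewrite Xm; case: (t \in m) (@set_mem _ m t) => // /(_ isT).
  case=> [e|c].
    rewrite pre_inl post_inl Xm /=; case: (e \in m) => /=; lia.
  have Xm0 : forall t, t \notin fset_set m -> X t = 0%N.
    by move=> t; rewrite in_fset_set // Xm => /negbTE ->.
  case: c => [[A B] [Tc finA]].
  rewrite pre_inr /NT_init /=.
  have [a Aa] := @rooted_nonempty _ _ _ rT Tc.
  have aA : a \in fset_set A by rewrite in_fset_set // inE.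
  have pos : (0 < #|` fset_set A|)%N := @size_pos _ _ _ aA.
  have bnd : (\sum_(t <- fset_set A) X t <= #|` fset_set A|)%N.
    rewrite -sum1_size; apply: leq_sum => t _; rewrite Xm; by case: (t \in m).
  case: (pselect (A `<=` m)) => Am.
    have [b [Bb mb]] := mod _ Tc Am.
    set p := postset _ _.
    have p1 : (1 <= p)%N.
      rewrite /p /postset (fsbigTE (fset_set m)); last first.
        by move=> t /Xm0 ->.
      have bm : b \in fset_set m by rewrite in_fset_set // inE.
      rewrite (bigD1_seq b) //= Xm (mem_set mb) /NT_post /= (mem_set Bb).
      by rewrite mul1n addn_gt0 ltnSn.
    move: bnd pos p1; set k := #|` _|; set q := \sum_(_ <- _) _; lia.
  have [a' /not_implyP [Aa' nma']] := proj2 (existsNP _) Am.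
  have aA' : a' \in fset_set A by rewrite in_fset_set // inE.
  have bnd' : (\sum_(t <- fset_set A) X t < #|` fset_set A|)%N.
    rewrite -sum1_size (bigD1_seq a') // [X in (_ < X)%N](bigD1_seq a') //=.
    rewrite Xm; have -> : (a' \in m) = false by apply/negP => /set_mem.
    rewrite add0n add1n ltnS; apply: leq_sum => t _; rewrite Xm; by case: (t \in m).
  move: bnd' pos; set k := #|` _|; set q := \sum_(_ <- _) _; set p := postset _ _; lia.
Qed.
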